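(* Let $A\in\mathbb{R}^{m\times n}$ be semi-monotone, let $A=P_1-R_1+S_1$ be a double proper weak regular splitting and $A=P_2-R_2+S_2$ a double proper regular splitting of $A$. Suppose $N(S_2)=N(P_2)$, $R(S_2)=R(P_2)$, $1\notin\sigma(S_2P_1^{\dagger})$, $-1\notin\sigma(R_2P_1^{\dagger})$, $\widehat{A}^{\dagger}\geq 0$ and $\widehat{\mathcal{A}}^{\dagger}\geq 0$, where $\widehat{A}=(I-S_2P_1^{\dagger})A$ and $\widehat{\mathcal{A}}=(I+R_2P_1^{\dagger})A$. Let $\widehat{P}=\widehat{\mathcal{P}}=P_2$, $\widehat{R}=R_2-S_2P_1^{\dagger}R_1$ and $\widehat{\mathcal{R}}=R_2P_1^{\dagger}R_1-S_2$. If $\widehat{\mathcal{P}}^{\dagger}\widehat{\mathcal{R}}\geq\widehat{P}^{\dagger}\widehat{R}$ and $\widehat{\mathcal{P}}^{\dagger}\widehat{\mathcal{A}}\geq\widehat{P}^{\dagger}\widehat{A}$, then $\rho(\mathcal{W}_{12})\leq\rho(W_{12})<1$, where $$W_{12}=\begin{pmatrix} P_2^{\dagger}R_2-P_2^{\dagger}S_2P_1^{\dagger}R_1 & P_2^{\dagger}S_2P_1^{\dagger}S_1\\ I & 0\end{pmatrix},\qquad \mathcal{W}_{12}=\begin{pmatrix} P_2^{\dagger}R_2P_1^{\dagger}R_1-P_2^{\dagger}S_2 & -P_2^{\dagger}R_2P_1^{\dagger}S_1\\ I & 0\end{pmatrix}.$$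
   Context: For $M\in\mathbb{R}^{m\times n}$, $M^{\dagger}$ is its Moore–Penrose inverse, $R(M)$, $N(M)$ its range and null space; inequalities are entrywise; $\rho$ is the spectral radius, $\sigma$ the spectrum. $A$ is semi-monotone if $A^{\dagger}\geq0$. A double splitting $A=P-R+S$ is a double proper splitting if $R(P)=R(A)$ and $N(P)=N(A)$; it is double proper regular if moreover $P^{\dagger}\geq0$, $R\geq0$, $S\leq0$; double proper weak regular if moreover $P^{\dagger}\geq 0$, $P^{\dagger}R\geq 0$, $P^{\dagger}S\leq 0$. *)

(* Defs.v *)
From HB Require Import structures.
From mathcomp Require Import all_boot all_order all_algebra.
From mathcomp Require Import reals complex.
Set Implicit Arguments.
Unset Strict Implicit.
Unset Printing Implicit Defensive.
Import Order.TTheory GRing.Theory Num.Theory.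
Local Open Scope ring_scope.

Section Defs.
Variable R : realType.

Definition is_MP m n (M : 'M[R]_(m, n)) (X : 'M[R]_(n, m)) : Prop :=
  [/\ M *m X *m M = M, X *m M *m X = X,
      (M *m X)^T = M *m X & (X *m M)^T = X *m M].

Definition mx_nonneg m n (M : 'M[R]_(m, n)) : Prop := forall i j, 0 <= M i j.
Definition mx_nonpos m n (M : 'M[R]_(m, n)) : Prop := forall i j, M i j <= 0.
Definition mx_le m n (M N : 'M[R]_(m, n)) : Prop := forall i j, M i j <= N i j.

Definition in_range m n (M : 'M[R]_(m, n)) (y : 'cV[R]_m) : Prop :=
  exists x : 'cV[R]_n, y = M *m x.
Definition in_null m n (M : 'M[R]_(m, n)) (x : 'cV[R]_n) : Prop :=
  M *m x = 0.
Definition same_range m n (M N : 'M[R]_(m, n)) : Prop :=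
  forall y, in_range M y <-> in_range N y.
Definition same_null m n (M N : 'M[R]_(m, n)) : Prop :=
  forall x, in_null M x <-> in_null N x.

Definition cmx m n (M : 'M[R]_(m, n)) : 'M[R[i]]_(m, n) :=
  map_mx (fun x : R => (x%:C)%C) M.
Definition in_spectrum k (M : 'M[R]_k) (z : R[i]) : bool :=
  eigenvalue (cmx M) z.

Lemma char_poly_split k (M : 'M[R]_k) :
  exists rs : seq R[i],
    char_poly (cmx M) == \prod_(z <- rs) ('X - z%:P).
Proof.
have [rs Hrs] := closed_field_poly_normal (char_poly (cmx M)).
exists rs; apply/eqP.
by rewrite {1}Hrs (monicP (char_poly_monic _)) scale1r.
Qed.

Definition eigvals k (M : 'M[R]_k) : seq R[i] := xchoose (char_poly_split M).

Definition specrad k (M : 'M[R]_k) : R :=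
  \big[Num.max/0]_(z <- eigvals M) Normc.normc z.

End Defs.

(* Main.v *)
Require Import Defs.
From HB Require Import structures.
From mathcomp Require Import all_boot all_order all_algebra.
From mathcomp Require Import reals complex.
From mathcomp Require Import ring lra.
Import Order.TTheory GRing.Theory Num.Theory.
Local Open Scope ring_scope.

Set Implicit Arguments.
Unset Strict Implicit.
Unset Printing Implicit Defensive.


Section Spec.
Variable R : realType.
Local Notation normc := (@Normc.normc R).

Lemma normc_ge0 (z : R[i]) : 0 <= normc z.
Proof. by case: z => a b /=; rewrite sqrtr_ge0. Qed.

Lemma normc_real (x : R) : normc (x%:C)%C = `|x|.
Proof. by rewrite /= expr0n /= addr0 sqrtr_sqr. Qed.

Lemma normc_sum (I : Type) (s : seq I) (F : I -> R[i]) :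
  normc (\sum_(i <- s) F i) <= \sum_(i <- s) normc (F i).
Proof.
elim: s => [|a s IH]; first by rewrite !big_nil Normc.normc0.
rewrite !big_cons; apply: le_trans (le_normcD _ _) _; exact: lerD.
Qed.

Lemma eigvals_spec k (M : 'M[R]_k) :
  char_poly (cmx M) = \prod_(z <- eigvals M) ('X - z%:P).
Proof. apply/eqP; exact: (xchooseP (char_poly_split M)). Qed.

Lemma mem_eigvals k (M : 'M[R]_k) z :
  (z \in eigvals M) = eigenvalue (cmx M) z.
Proof. by rewrite eigenvalue_root_char eigvals_spec root_prod_XsubC. Qed.

Lemma specrad_ge0 k (M : 'M[R]_k) : 0 <= specrad M.
Proof.
rewrite /specrad; elim: (eigvals M) => [|a s IH]; first by rewrite big_nil.
by rewrite big_cons le_max IH orbT.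
Qed.

Lemma specrad_ge k (M : 'M[R]_k) z : z \in eigvals M -> normc z <= specrad M.
Proof.
rewrite /specrad; elim: (eigvals M) => [//|a s IH].
rewrite inE big_cons le_max => /orP[/eqP->|/IH->]; by rewrite ?lexx ?orbT.
Qed.

Lemma specrad_le k (M : 'M[R]_k) c :
  0 <= c -> (forall z, z \in eigvals M -> normc z <= c) -> specrad M <= c.
Proof.
move=> c0; rewrite /specrad; elim: (eigvals M) => [|a s IH] H; first by rewrite big_nil.
rewrite big_cons ge_max H ?inE ?eqxx //= IH // => z zs; apply: H; by rewrite inE zs orbT.
Qed.

Lemma specrad_lt k (M : 'M[R]_k) c :
  0 < c -> (forall z, z \in eigvals M -> normc z < c) -> specrad M < c.
Proof.
move=> c0; rewrite /specrad; elim: (eigvals M) => [|a s IH] H; first by rewrite big_nil.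
rewrite big_cons gt_max H ?inE ?eqxx //= IH // => z zs; apply: H; by rewrite inE zs orbT.
Qed.

End Spec.


Section S2.
Variable R : realType.
Local Notation normc := (@Normc.normc R).

Lemma eig_abs k (M : 'M[R]_k) e : mx_nonneg M -> e \in eigvals M ->
  exists u : 'rV[R]_k, [/\ mx_nonneg u, u != 0 &
     forall j, normc e * u 0 j <= (u *m M) 0 j].
Proof.
move=> M0; rewrite mem_eigvals => /eigenvalueP [v Hv v0].
exists (\row_j normc (v 0 j)); split.
- by move=> i j; rewrite mxE normc_ge0.
- apply: contra v0 => /eqP u0; apply/eqP/matrixP => i j.
  move/matrixP: u0 => /(_ i j); rewrite !mxE => /Normc.eq0_normc.
  by rewrite (ord1 i).
- move=> j; move/matrixP: Hv => /(_ 0 j); rewrite !mxE => E.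
  rewrite -Normc.normcM -E.
  apply: (le_trans (normc_sum _ _)); apply: ler_sum => i _.
  by rewrite !mxE Normc.normcM normc_real ger0_norm.
Qed.

End S2.


Section S3.
Variable R : realType.
Local Notation normc := (@Normc.normc R).

Lemma rec_bound (a b : nat -> R[i]) (z : R[i]) (r Bb : R) :
 0 < r -> normc z < r -> (forall t, a t.+1 = z * a t + b t) ->
 (forall K, \sum_(t < K) normc (b t) / r ^+ t <= Bb) ->
 exists Ba, forall K, \sum_(t < K) normc (a t) / r ^+ t <= Ba.
Proof.
move=> r0 zr Hab HB.
set q := normc z / r.
have q1 : 0 < 1 - q by rewrite subr_gt0 ltr_pdivrMr // mul1r.
have q0 : 0 <= q by rewrite divr_ge0 ?normc_ge0 // ltW.
exists ((normc (a 0%N) + Bb / r) / (1 - q)) => K.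
set S := \sum_(t < K) _.
have S1 : S <= \sum_(t < K.+1) normc (a t) / r ^+ t.
  rewrite big_ord_recr /= lerDl divr_ge0 ?normc_ge0 // exprn_ge0 // ltW //.
have S2 : \sum_(t < K.+1) normc (a t) / r ^+ t <= normc (a 0%N) + (q * S + Bb / r).
  rewrite big_ord_recl /= expr0 divr1 lerD2l.
  apply: (le_trans (y := \sum_(t < K) (q * (normc (a t) / r ^+ t) + (normc (b t) / r ^+ t) / r))).
    apply: ler_sum => t _; rewrite Hab /bump /=.
    have rt : 0 < r ^+ t by rewrite exprn_gt0.
    apply: (le_trans (y := (normc z * normc (a t) + normc (b t)) / r ^+ t.+1)).
      apply: ler_wpM2r; first by rewrite invr_ge0 exprn_ge0 // ltW.
      by apply: (le_trans (le_normcD _ _)); rewrite Normc.normcM.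
    rewrite exprSr /q; rewrite le_eqVlt; apply/orP; left; apply/eqP; field.
    by apply/andP; split; rewrite gt_eqF.
  rewrite big_split /= -mulr_sumr -mulr_suml; apply: lerD => //.
  by apply: ler_wpM2r; [rewrite invr_ge0 ltW | exact: HB].
have : (1 - q) * S <= normc (a 0%N) + Bb / r.
  rewrite mulrBl mul1r lerBlDr; apply: (le_trans S1); apply: (le_trans S2); rewrite le_eqVlt; apply/orP; left; apply/eqP; ring.
by rewrite mulrC ler_pdivlMr.
Qed.

End S3.


Section S4.
Variable R : realType.
Local Notation normc := (@Normc.normc R).

Lemma cmxM m n p (A : 'M[R]_(m, n)) (B : 'M[R]_(n, p)) : cmx (A *m B) = cmx A *m cmx B.
Proof. exact: (map_mxM (real_complex R)). Qed.

Lemma cmxX k (M : 'M[R]_k) t : cmx (M ^+ t) = cmx M ^+ t.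
Proof.
elim: t => [|t IH].
  by apply/matrixP => i j; rewrite !mxE; case: (i == j).
by rewrite !exprS -!mulmxE cmxM IH.
Qed.

Lemma cw_prod k (M : 'M[R]_k) r (rs : seq R[i]) : 0 < r ->
  (forall z, z \in rs -> normc z < r) ->
  forall Q : 'M[R[i]]_k, Q *m \prod_(z <- rs) (cmx M - z%:M) = 0 ->
  forall i j, exists Bd, forall K,
    \sum_(t < K) normc ((Q *m cmx M ^+ t) i j) / r ^+ t <= Bd.
Proof.
move=> r0; elim: rs => [|z rs IH] Hrs Q HQ i j.
  move: HQ; rewrite big_nil mulmx1 => ->; exists 0 => K.
  rewrite big1 // => t _; by rewrite mul0mx mxE Normc.normc0 mul0r.
have H1 : forall w, w \in rs -> normc w < r.
  by move=> w ws; apply: Hrs; rewrite inE ws orbT.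
have H2 : Q *m (cmx M - z%:M) *m \prod_(z <- rs) (cmx M - z%:M) = 0.
  by rewrite -mulmxA; move: HQ; rewrite big_cons -mulmxE.
have [Bd HBd] := IH H1 _ H2 i j.
have Hz : normc z < r by apply: Hrs; rewrite inE eqxx.
apply: (@rec_bound _ (fun t => (Q *m cmx M ^+ t) i j) (fun t => (Q *m (cmx M - z%:M) *m cmx M ^+ t) i j) z r Bd r0 Hz _ HBd).
move=> t /=.
have -> : Q *m cmx M ^+ t.+1 = z *: (Q *m cmx M ^+ t) + (Q *m (cmx M - z%:M) *m cmx M ^+ t).
  by rewrite exprS -mulmxE mulmxA mulmxBr mul_mx_scalar mulmxBl -scalemxAl addrC subrK.
by rewrite [in LHS]mxE [X in X + _]mxE.
Qed.

Lemma sum_bound (I : eqType) (s : seq I) (w : I -> R) (f : I -> nat -> R) :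
  (forall i, 0 <= w i) ->
  (forall i, exists B, forall K, f i K <= B) ->
  exists C, forall K, \sum_(i <- s) w i * f i K <= C.
Proof.
move=> w0 Hf; elim: s => [|a s [C HC]]; first by exists 0 => K; rewrite big_nil.
have [B HB] := Hf a; exists (w a * B + C) => K; rewrite big_cons.
by apply: lerD => //; apply: ler_wpM2l.
Qed.

Lemma cw k (M : 'M[R]_k) (z : 'rV[R]_k) r : mx_nonneg M -> mx_nonneg z ->
  z != 0 -> 0 < r -> (forall j, r * z 0 j <= (z *m M) 0 j) ->
  exists2 e, e \in eigvals M & r <= normc e.
Proof.
move=> M0 z0 znz r0 Hz.
case: (boolP (has (fun e => r <= normc e) (eigvals M))) => [/hasP[e ? ?]|]; first by exists e.
move/hasPn => Hlt; exfalso.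
have Hlt' : forall e, e \in eigvals M -> normc e < r.
  by move=> e /Hlt; rewrite ltNge.
have [j zj] : exists j, 0 < z 0 j.
  apply/existsP; apply: contraR znz => /existsPn H; apply/eqP/matrixP => i j.
  rewrite (ord1 i) mxE; apply/eqP; rewrite eq_le z0 andbT; move: (H j).
  by rewrite lt_neqAle z0 andbT negbK => /eqP <-.
clear Hlt; move: M z M0 z0 znz Hz Hlt' j zj; case: k => [|k] M z M0 z0 znz Hz Hlt' j zj; first by case: j zj.
have CH : 1 *m \prod_(w <- eigvals M) (cmx M - w%:M) = 0.
  rewrite mul1mx -(Cayley_Hamilton (cmx M)) eigvals_spec rmorph_prod.
  by apply: eq_bigr => w _; rewrite rmorphB /= horner_mx_X horner_mx_C.
have Hb := cw_prod r0 Hlt' CH.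
have [C HC] := @sum_bound _ (index_enum 'I_k.+1) (fun i => z 0 i)
  (fun i K => \sum_(t < K) normc ((1 *m cmx M ^+ t) i j) / r ^+ t) (fun i => z0 0 i)
  (fun i => Hb i j).
have Hpow : forall t j', r ^+ t * z 0 j' <= (z *m M ^+ t) 0 j'.
  elim=> [|t IH] j'; first by rewrite expr0 mul1r mulmx1.
  rewrite [M ^+ _.+1]exprSr -mulmxE mulmxA mxE exprSr -mulrA.
  apply: (le_trans (y := r ^+ t * (z *m M) 0 j')).
    apply: ler_wpM2l; [by rewrite exprn_ge0 ?ltW | exact: Hz].
  rewrite [in X in X <= _]mxE mulr_sumr; apply: ler_sum => i _; rewrite mulrA.
  by apply: ler_wpM2r; [exact: M0 | exact: IH].
have Ht : forall t, z 0 j <= \sum_i z 0 i * (normc ((1 *m cmx M ^+ t) i j) / r ^+ t).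
  move=> t; have rt : 0 < r ^+ t by rewrite exprn_gt0.
  rewrite -(ler_pM2l rt); apply: (le_trans (Hpow t j)).
  rewrite mxE mulr_sumr; apply: ler_sum => i _.
  have -> : r ^+ t * (z 0 i * (normc ((1 *m cmx M ^+ t) i j) / r ^+ t)) =
    z 0 i * normc ((1 *m cmx M ^+ t) i j).
    by field; rewrite gt_eqF.
  apply: ler_wpM2l => //.
  by rewrite mul1mx -cmxX mxE normc_real ler_norm.
have HK : forall K, z 0 j *+ K <= C.
  move=> K; apply: le_trans (HC K).
  have -> : z 0 j *+ K = \sum_(t < K) z 0 j.
    by rewrite big_const_ord; elim: K {HC} => //= K <-; rewrite mulrS.
  rewrite (eq_bigr (fun i => \sum_(t < K) z 0 i * (normc ((1 *m cmx M ^+ t) i j) / r ^+ t))); last first.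
    by move=> i _; rewrite mulr_sumr.
  rewrite exchange_big /=.
  by apply: ler_sum => t _; exact: Ht.
have C0 : 0 <= C / z 0 j by rewrite divr_ge0 // (le_trans _ (HK 0%N)) // mulr0n.
have := archi_boundP C0; rewrite ltr_pdivrMr // => H.
by move: H; rewrite mulrC mulr_natr => H; have := lt_le_trans H (HK _); rewrite ltxx.
Qed.

End S4.


Section S5.
Variable R : realType.
Local Notation normc := (@Normc.normc R).

Lemma mxBE m n (A B : 'M[R]_(m, n)) i j : (A - B) i j = A i j - B i j.
Proof. by rewrite !mxE. Qed.
Lemma mxDE m n (A B : 'M[R]_(m, n)) i j : (A + B) i j = A i j + B i j.
Proof. by rewrite !mxE. Qed.
Lemma mxNE m n (A : 'M[R]_(m, n)) i j : (- A) i j = - A i j.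
Proof. by rewrite !mxE. Qed.
Lemma mxZE m n (A : 'M[R]_(m, n)) a i j : (a *: A) i j = a * A i j.
Proof. by rewrite !mxE. Qed.

Lemma nonneg_mul m n p (A : 'M[R]_(m, n)) (B : 'M[R]_(n, p)) :
  mx_nonneg A -> mx_nonneg B -> mx_nonneg (A *m B).
Proof. by move=> HA HB i j; rewrite mxE sumr_ge0 // => k _; rewrite mulr_ge0. Qed.

Lemma nonneg_add m n (A B : 'M[R]_(m, n)) :
  mx_nonneg A -> mx_nonneg B -> mx_nonneg (A + B).
Proof. by move=> HA HB i j; rewrite mxE addr_ge0. Qed.

Lemma nonneg_block n (A B C D : 'M[R]_n) :
  mx_nonneg A -> mx_nonneg B -> mx_nonneg C -> mx_nonneg D ->
  mx_nonneg (block_mx A B C D).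
Proof.
move=> HA HB HC HD i j; rewrite !mxE.
by case: (split i) => i'; rewrite ?mxE; case: (split j) => j'; rewrite ?mxE.
Qed.

Lemma rowmul_le m n (u : 'rV[R]_m) (A B : 'M[R]_(m, n)) :
  mx_nonneg u -> mx_nonneg (B - A) -> forall j, (u *m A) 0 j <= (u *m B) 0 j.
Proof.
move=> u0 H j; rewrite -subr_ge0.
by have := nonneg_mul u0 H 0 j; rewrite mulmxBr mxBE.
Qed.

Definition L1prop n (T : 'M[R]_n) := forall u : 'rV[R]_n, mx_nonneg u ->
  (forall j, u 0 j <= (u *m T) 0 j) -> u = 0.

Lemma quad n (B C : 'M[R]_n) (u1 u2 : 'rV[R]_n) r :
  mx_nonneg B -> mx_nonneg C -> mx_nonneg (row_mx u1 u2) -> row_mx u1 u2 != 0 -> 0 < r ->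
  (forall j, r * row_mx u1 u2 0 j <= (row_mx u1 u2 *m block_mx B C 1%:M 0) 0 j) ->
  [/\ u1 != 0, mx_nonneg u1,
      (forall j, r * u1 0 j <= (u1 *m B) 0 j + u2 0 j) &
      (forall j, r * u2 0 j <= (u1 *m C) 0 j)].
Proof.
move=> B0 C0 u0 unz r0 H.
have HL : forall j, r * u1 0 j <= (u1 *m B) 0 j + u2 0 j.
  move=> j; have := H (lshift n j).
  by rewrite mul_row_block !row_mxEl mulmx1 mxDE.
have HR : forall j, r * u2 0 j <= (u1 *m C) 0 j.
  move=> j; have := H (rshift n j).
  by rewrite mul_row_block !row_mxEr mulmx0 addr0.
have ul0 : mx_nonneg u1 by move=> i j; have := u0 i (lshift n j); rewrite row_mxEl.
have ur0 : mx_nonneg u2 by move=> i j; have := u0 i (rshift n j); rewrite row_mxEr.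
split => //.
apply: contra unz => /eqP ul; apply/eqP.
rewrite ul; have -> : u2 = 0.
  apply/matrixP => i j; rewrite (ord1 i) [RHS]mxE.
  have := HR j; rewrite ul mul0mx mxE => h.
  apply/eqP; rewrite eq_le -(pmulr_rle0 _ r0) h /=.
  exact: ur0.
by rewrite row_mx0.
Qed.

Lemma nonneg1 n : mx_nonneg (1%:M : 'M[R]_n).
Proof. by move=> i j; rewrite mxE ler0n. Qed.
Lemma nonneg0 m n : mx_nonneg (0 : 'M[R]_(m, n)).
Proof. by move=> i j; rewrite mxE. Qed.

Lemma nonneg_row n (u1 u2 : 'rV[R]_n) :
  mx_nonneg u1 -> mx_nonneg u2 -> mx_nonneg (row_mx u1 u2).
Proof.
move=> H1 H2 i j; rewrite -(splitK j); case: (split j) => j' /=.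
  by rewrite row_mxEl. by rewrite row_mxEr.
Qed.

Lemma claimA n (B C : 'M[R]_n) : mx_nonneg B -> mx_nonneg C -> L1prop (B + C) ->
  specrad (block_mx B C 1%:M 0) < 1.
Proof.
move=> B0 C0 HL1; apply: specrad_lt => // e He.
have Wnn := nonneg_block B0 C0 (@nonneg1 n) (@nonneg0 n n).
have [u [u0 unz Hu]] := eig_abs Wnn He.
rewrite ltNge; apply/negP => r1.
have r0 : 0 < normc e by apply: lt_le_trans ltr01 r1.
move: u0 unz Hu; rewrite -(hsubmxK u); set u1 := lsubmx u; set u2 := rsubmx u => u0 unz Hu.
have [u1nz u1nn HL HR] := quad B0 C0 u0 unz r0 Hu.
apply: (negP u1nz); apply/eqP; apply: HL1 => // j.
have a0 := u1nn 0 j.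
have d0 : 0 <= u2 0 j by have := u0 0 (rshift n j); rewrite row_mxEr.
have b0 := nonneg_mul u1nn B0 0 j; have c0 := nonneg_mul u1nn C0 0 j.
have h1 := HL j; have h2 := HR j.
rewrite mulmxDr mxDE.
move: a0 d0 b0 c0 h1 h2 r1; set a := u1 0 j; set d := u2 0 j;
  set b := (u1 *m B) 0 j; set c := (u1 *m C) 0 j; set r := normc e => *.
nra.
Qed.

Lemma claimB n (B C B' C' : 'M[R]_n) : mx_nonneg B -> mx_nonneg C ->
  mx_nonneg B' -> mx_nonneg C' -> L1prop (B + C) ->
  mx_nonneg (B' - B) -> mx_nonneg ((B + C) - (B' + C')) ->
  specrad (block_mx B' C' 1%:M 0) <= specrad (block_mx B C 1%:M 0).
Proof.
move=> B0 C0 B'0 C'0 HL1 HBB HS.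
apply: specrad_le; first exact: specrad_ge0.
move=> e He; rewrite leNgt; apply/negP => Hs.
have s0 := specrad_ge0 (block_mx B C 1%:M 0).
have r0 : 0 < normc e by apply: le_lt_trans s0 Hs.
have Wnn := nonneg_block B0 C0 (@nonneg1 n) (@nonneg0 n n).
have Wnn' := nonneg_block B'0 C'0 (@nonneg1 n) (@nonneg0 n n).
have [u [u0 unz Hu]] := eig_abs Wnn' He.
move: u0 unz Hu; rewrite -(hsubmxK u); set u1 := lsubmx u; set u2 := rsubmx u => u0 unz Hu.
have [u1nz u1nn HL HR] := quad B'0 C'0 u0 unz r0 Hu.
set r := normc e in r0 Hs HL HR.
have key : forall j, 0 <= u1 0 j /\ 0 <= u2 0 j /\ 0 <= (u1 *m B) 0 j /\ 0 <= (u1 *m C) 0 j /\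
   (u1 *m B) 0 j <= (u1 *m B') 0 j /\ (u1 *m B') 0 j + (u1 *m C') 0 j <= (u1 *m B) 0 j + (u1 *m C) 0 j
   /\ 0 <= (u1 *m B') 0 j /\ 0 <= (u1 *m C') 0 j.
  move=> j; split; [|split; [|split; [|split; [|split; [|split]]]]].
  - exact: u1nn.
  - by have := u0 0 (rshift n j); rewrite row_mxEr.
  - exact: nonneg_mul.
  - exact: nonneg_mul.
  - exact: rowmul_le.
  - by rewrite -!mxDE -!mulmxDr; apply: rowmul_le.
  - by split; apply: nonneg_mul.
case: (leP 1 r) => r1.
  apply: (negP u1nz); apply/eqP; apply: HL1 => // j.
  have [a0 [d0 [b0 [c0 [hb [hs [b'0 c'0]]]]]]] := key j.
  have h1 := HL j; have h2 := HR j.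
  rewrite mulmxDr mxDE.
  move: a0 d0 b0 c0 hb hs b'0 c'0 h1 h2 r1; set a := u1 0 j; set d := u2 0 j;
    set b := (u1 *m B) 0 j; set c := (u1 *m C) 0 j;
    set b' := (u1 *m B') 0 j; set c' := (u1 *m C') 0 j => *.
  nra.
set z := row_mx u1 (r^-1 *: (u1 *m C)).
have z0 : mx_nonneg z.
  apply: nonneg_row => // i j; rewrite mxZE; apply: mulr_ge0.
    by rewrite invr_ge0 ltW.
  exact: nonneg_mul.
have znz : z != 0.
  apply: contra u1nz => /eqP z0'; apply/eqP/matrixP => i j.
  by move/matrixP: z0' => /(_ i (lshift n j)); rewrite row_mxEl !mxE.
have Hz : forall j', r * z 0 j' <= (z *m block_mx B C 1%:M 0) 0 j'.
  move=> j'; rewrite -(splitK j'); case: (split j') => j /=.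
    rewrite mul_row_block !row_mxEl mulmx1 mxDE mxZE.
    have [a0 [d0 [b0 [c0 [hb [hs [b'0 c'0]]]]]]] := key j.
    have h1 := HL j; have h2 := HR j.
    move: a0 d0 b0 c0 hb hs b'0 c'0 h1 h2 r1; set a := u1 0 j; set d := u2 0 j;
      set b := (u1 *m B) 0 j; set c := (u1 *m C) 0 j;
      set b' := (u1 *m B') 0 j; set c' := (u1 *m C') 0 j => *.
    rewrite -(ler_pM2l r0) mulrDr [r * (r^-1 * c)]mulrA mulfV ?gt_eqF // mul1r. nra.
  rewrite mul_row_block !row_mxEr mulmx0 addr0 mxZE mulrA mulfV ?gt_eqF // mul1r.
  exact: lexx.
have [e' He' Hre'] := cw Wnn z0 znz r0 Hz.
move: (specrad_ge He') => h.
by have := le_lt_trans (le_trans Hre' h) Hs; rewrite ltxx.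
Qed.

End S5.


Section S6.
Variable R : realType.

Lemma mx_ext_col m n (M N : 'M[R]_(m, n)) :
  (forall x : 'cV[R]_n, M *m x = N *m x) -> M = N.
Proof.
move=> H; apply/matrixP => i j.
have := H (delta_mx j 0); rewrite -!colE => /matrixP /(_ i 0).
by rewrite !mxE.
Qed.

Lemma nullMP m n p (P : 'M[R]_(m, n)) Pd (Q : 'M[R]_(p, n)) : is_MP P Pd ->
  (forall x : 'cV_n, P *m x = 0 -> Q *m x = 0) -> Q *m Pd *m P = Q.
Proof.
case=> H1 _ _ _ HQ; apply: mx_ext_col => x.
have : P *m (x - Pd *m P *m x) = 0.
  by rewrite mulmxBr !mulmxA H1 subrr.
move/HQ; rewrite mulmxBr !mulmxA => /eqP; rewrite subr_eq0 => /eqP ->.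
by [].
Qed.

Lemma rangeMP m n p (Ah : 'M[R]_(m, n)) Ahd (P : 'M[R]_(m, p)) : is_MP Ah Ahd ->
  (forall x : 'cV_p, exists w, P *m x = Ah *m w) -> Ah *m Ahd *m P = P.
Proof.
case=> H1 _ _ _ HP; apply: mx_ext_col => x.
have [w Hw] := HP x; by rewrite -mulmxA Hw mulmxA H1.
Qed.

Lemma MP_left m n (P Ah : 'M[R]_(m, n)) Pd Ahd : is_MP P Pd -> is_MP Ah Ahd ->
  Ah *m Ahd *m P = P -> Pd *m Ah *m Ahd = Pd.
Proof.
case=> _ P2 P3 _ [_ _ A3 _] H.
have E1 : P^T = P^T *m (Ah *m Ahd) by rewrite -{1}H trmx_mul A3.
symmetry; rewrite -{1}P2 -mulmxA -P3 trmx_mul E1 (mulmxA Pd^T) -trmx_mul P3 !mulmxA P2.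
by [].
Qed.

Lemma MP_right m n (P Ah : 'M[R]_(m, n)) Pd Ahd : is_MP P Pd -> is_MP Ah Ahd ->
  Ah *m Pd *m P = Ah -> Pd *m P *m Ahd = Ahd.
Proof.
case=> _ _ _ P4 [_ A2 _ A4] H.
rewrite -A2 -A4 trmx_mul !mulmxA.
suff -> : Pd *m P *m Ah^T = Ah^T by [].
by rewrite -P4 -trmx_mul mulmxA H.
Qed.

Lemma rowmono m n (x y : 'rV[R]_m) (M : 'M[R]_(m, n)) :
  (forall j, x 0 j <= y 0 j) -> mx_nonneg M -> forall j, (x *m M) 0 j <= (y *m M) 0 j.
Proof.
move=> H M0 j; rewrite -subr_ge0.
have : mx_nonneg (y - x) by move=> i k; rewrite (ord1 i) mxBE subr_ge0.
by move/nonneg_mul => /(_ _ _ M0 0 j); rewrite mulmxBl mxBE.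
Qed.

Lemma L1_gen m n (T : 'M[R]_n) (Pd Ahd : 'M[R]_(n, m)) (N : 'M[R]_(m, n)) :
  mx_nonneg T -> mx_nonneg Pd -> mx_nonneg Ahd -> T = Pd *m N ->
  Ahd - T *m Ahd = Pd -> L1prop T.
Proof.
move=> T0 Pd0 Ahd0 TN HA u u0 Hu.
have Hpow : forall t j, u 0 j <= (u *m T ^+ t) 0 j.
  elim => [|t IH] j; first by rewrite expr0 mulmx1.
  rewrite exprSr -mulmxE mulmxA; apply: le_trans (Hu j) _; exact: rowmono.
have Hsum : forall K, \sum_(t < K) T ^+ t *m Pd = Ahd - T ^+ K *m Ahd.
  elim => [|K IH]; first by rewrite big_ord0 expr0 mul1mx subrr.
  rewrite big_ord_recr /= IH -HA mulmxBr mulmxA mulmxE -exprSr.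
  by rewrite addrA subrK.
have HuP : u *m Pd = 0.
  apply/matrixP => i j; rewrite (ord1 i) [RHS]mxE; apply/eqP.
  rewrite eq_le (nonneg_mul u0 Pd0) andbT.
  rewrite leNgt; apply/negP => pos.
  set p := (u *m Pd) 0 j in pos.
  have HK : forall K, p *+ K <= (u *m Ahd) 0 j.
    move=> K.
    have h1 : (u *m (Ahd - T ^+ K *m Ahd)) 0 j <= (u *m Ahd) 0 j.
      rewrite mulmxBr mxBE mulmxA lerBlDr lerDl; apply: nonneg_mul => // i' k.
      rewrite (ord1 i'); exact: le_trans (u0 0 k) (Hpow K k).
    apply: le_trans h1; rewrite -Hsum mulmx_sumr summxE.
    have -> : p *+ K = \sum_(t < K) p.
      by rewrite big_const_ord; elim: K {Hsum} => //= K <-; rewrite mulrS.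
    apply: ler_sum => t _; rewrite mulmxA.
    by apply: (le_trans (rowmono (Hpow t) Pd0 j)); rewrite lexx.
  have C0 : 0 <= (u *m Ahd) 0 j / p.
    by rewrite divr_ge0 ?(ltW pos) // (nonneg_mul u0 Ahd0).
  have := archi_boundP C0; rewrite ltr_pdivrMr // => H.
  by move: H; rewrite mulrC mulr_natr => H; have := lt_le_trans H (HK _); rewrite ltxx.
apply/matrixP => i j; rewrite (ord1 i) [RHS]mxE; apply/eqP; rewrite eq_le u0 andbT.
by have := Hu j; rewrite TN mulmxA HuP mul0mx mxE.
Qed.

Lemma unit_of_spec m (M : 'M[R]_m) : ~~ in_spectrum M 1 -> (1%:M - M) \in unitmx.
Proof.
move=> H; rewrite -row_free_unit -kermx_eq0; apply: contraR H => Hk.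
set K := kermx (1%:M - M) in Hk.
case: (pickP (fun i => row i K != 0)) => [i Hi | H0]; last first.
  suff : K = 0 by move=> E; rewrite E eqxx in Hk.
  by apply/row_matrixP => i; rewrite row0; apply/eqP; move: (H0 i) => /= /negbFE.
set v := row i K in Hi.
have Hv : v *m M = v.
  have : v *m (1%:M - M) = 0 by rewrite -row_mul mulmx_ker row0.
  by rewrite mulmxBr mulmx1 => /eqP; rewrite subr_eq0 => /eqP <-.
apply/eigenvalueP; exists (cmx v).
  by rewrite -cmxM Hv scale1r.
by rewrite /cmx (map_mx_eq0 (real_complex R)).
Qed.

End S6.


Lemma nonneg_opp (R : realType) m n (A : 'M[R]_(m, n)) : mx_nonpos A -> mx_nonneg (- A).
Proof. by move=> H i j; rewrite mxNE oppr_ge0. Qed.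

Lemma le_nonneg (R : realType) m n (A B : 'M[R]_(m, n)) : mx_le A B -> mx_nonneg (B - A).
Proof. by move=> H i j; rewrite mxBE subr_ge0. Qed.

Unset Implicit Arguments.

Theorem theorem3p19 (R : realType) (m n : nat)
  (A P1 R1 S1 P2 R2 S2 : 'M[R]_(m, n))
  (Ad P1d P2d Ahd Acd : 'M[R]_(n, m))
  (hAd : is_MP A Ad) (hAmono : mx_nonneg Ad)
  (hspl1 : A = P1 - R1 + S1)
  (hP1r : same_range P1 A) (hP1n : same_null P1 A)
  (hP1d : is_MP P1 P1d) (hP1d0 : mx_nonneg P1d)
  (hP1R1 : mx_nonneg (P1d *m R1)) (hP1S1 : mx_nonpos (P1d *m S1))
  (hspl2 : A = P2 - R2 + S2)
  (hP2r : same_range P2 A) (hP2n : same_null P2 A)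
  (hP2d : is_MP P2 P2d) (hP2d0 : mx_nonneg P2d)
  (hR2 : mx_nonneg R2) (hS2 : mx_nonpos S2)
  (hS2n : same_null S2 P2) (hS2r : same_range S2 P2)
  (hsig1 : ~~ in_spectrum (S2 *m P1d) 1)
  (hsig2 : ~~ in_spectrum (R2 *m P1d) (-1))
  (hAhd : is_MP ((1%:M - S2 *m P1d) *m A) Ahd) (hAhd0 : mx_nonneg Ahd)
  (hAcd : is_MP ((1%:M + R2 *m P1d) *m A) Acd) (hAcd0 : mx_nonneg Acd)
  (hcmpR : mx_le (P2d *m (R2 - S2 *m P1d *m R1))
                 (P2d *m (R2 *m P1d *m R1 - S2)))
  (hcmpA : mx_le (P2d *m ((1%:M - S2 *m P1d) *m A))
                 (P2d *m ((1%:M + R2 *m P1d) *m A))) :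
  let W12 : 'M[R]_(n + n) :=
    block_mx (P2d *m R2 - P2d *m S2 *m P1d *m R1) (P2d *m S2 *m P1d *m S1)
             1%:M 0 in
  let cW12 : 'M[R]_(n + n) :=
    block_mx (P2d *m R2 *m P1d *m R1 - P2d *m S2) (- (P2d *m R2 *m P1d *m S1))
             1%:M 0 in
  specrad cW12 <= specrad W12 < 1.
Proof.
cbv zeta.
have hR2e : R2 = P2 + S2 - A.
  by rewrite hspl2; apply/matrixP => i j; rewrite !mxE; ring.
have F1a : S2 *m P1d *m P1 = S2.
  apply: (@nullMP R _ _ _ P1 P1d) => // x hx.
  by apply/(hS2n x)/(hP2n x)/(hP1n x).
have F1b : R2 *m P1d *m P1 = R2.
  apply: (@nullMP R _ _ _ P1 P1d) => // x hx.
  have hA : A *m x = 0 by apply/(hP1n x).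
  have hP : P2 *m x = 0 by apply/(hP2n x).
  have hS : S2 *m x = 0 by apply/(hS2n x).
  by rewrite hR2e mulmxBl mulmxDl hA hP hS !addr0 subrr.
have F1c : A *m P2d *m P2 = A.
  apply: (@nullMP R _ _ _ P2 P2d) => // x hx; exact/(hP2n x).
set X := 1%:M - S2 *m P1d.
have Xu : X \in unitmx by exact: unit_of_spec.
set Ah := X *m A.
have SA : S2 *m P1d *m A = S2 - S2 *m P1d *m R1 + S2 *m P1d *m S1.
  by rewrite {1}hspl1 mulmxDr mulmxBr F1a.
have RA : R2 *m P1d *m A = R2 - R2 *m P1d *m R1 + R2 *m P1d *m S1.
  by rewrite {1}hspl1 mulmxDr mulmxBr F1b.
have AhE : Ah = P2 - (R2 - S2 *m P1d *m R1 + S2 *m P1d *m S1).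
  rewrite /Ah /X mulmxBl mul1mx SA {1}hspl2.
  move: (S2 *m P1d *m R1) (S2 *m P1d *m S1) => Y1 Y2.
  by apply/matrixP => i j; rewrite !mxE; ring.
have I6 : (P2d *m R2 - P2d *m S2 *m P1d *m R1) + P2d *m S2 *m P1d *m S1 =
          P2d *m (R2 - S2 *m P1d *m R1 + S2 *m P1d *m S1).
  by rewrite mulmxDr mulmxBr !mulmxA.
have I4 : P2d *m Ah = P2d *m P2 - ((P2d *m R2 - P2d *m S2 *m P1d *m R1) + P2d *m S2 *m P1d *m S1).
  by rewrite AhE mulmxBr I6.
have I5 : P2d *m ((1%:M + R2 *m P1d) *m A) = P2d *m P2 -
   ((P2d *m R2 *m P1d *m R1 - P2d *m S2) + - (P2d *m R2 *m P1d *m S1)).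
  rewrite mulmxDl mul1mx RA {1}hspl2 !(mulmxDr, mulmxN) !mulmxA.
  move: (P2d *m P2) (P2d *m R2) (P2d *m S2) (P2d *m R2 *m P1d *m R1) (P2d *m R2 *m P1d *m S1) => Y1 Y2 Y3 Y4 Y5.
  by apply/matrixP => i j; rewrite !mxE; ring.
have I2 : P2d *m (R2 - S2 *m P1d *m R1) = P2d *m R2 - P2d *m S2 *m P1d *m R1.
  by rewrite mulmxBr !mulmxA.
have I3 : P2d *m (R2 *m P1d *m R1 - S2) = P2d *m R2 *m P1d *m R1 - P2d *m S2.
  by rewrite mulmxBr !mulmxA.
have mS2 := nonneg_opp hS2.
have mP1S1 := nonneg_opp hP1S1.
have B0 : mx_nonneg (P2d *m R2 - P2d *m S2 *m P1d *m R1).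
  have -> : P2d *m R2 - P2d *m S2 *m P1d *m R1 = P2d *m R2 + P2d *m (- S2) *m (P1d *m R1).
    by rewrite mulmxN mulNmx !mulmxA.
  by apply: nonneg_add; apply: nonneg_mul => //; apply: nonneg_mul.
have C0 : mx_nonneg (P2d *m S2 *m P1d *m S1).
  have -> : P2d *m S2 *m P1d *m S1 = P2d *m (- S2) *m (- (P1d *m S1)).
    by rewrite !mulmxN mulNmx opprK !mulmxA.
  by apply: nonneg_mul => //; apply: nonneg_mul.
have B'0 : mx_nonneg (P2d *m R2 *m P1d *m R1 - P2d *m S2).
  have -> : P2d *m R2 *m P1d *m R1 - P2d *m S2 = P2d *m R2 *m (P1d *m R1) + P2d *m (- S2).
    by rewrite mulmxN !mulmxA.
  by apply: nonneg_add; apply: nonneg_mul => //; apply: nonneg_mul.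
have C'0 : mx_nonneg (- (P2d *m R2 *m P1d *m S1)).
  have -> : - (P2d *m R2 *m P1d *m S1) = P2d *m R2 *m (- (P1d *m S1)).
    by rewrite mulmxN !mulmxA.
  by apply: nonneg_mul => //; apply: nonneg_mul.
have HBB : mx_nonneg ((P2d *m R2 *m P1d *m R1 - P2d *m S2) - (P2d *m R2 - P2d *m S2 *m P1d *m R1)).
  by rewrite -I2 -I3; apply: le_nonneg.
have HS : mx_nonneg (((P2d *m R2 - P2d *m S2 *m P1d *m R1) + P2d *m S2 *m P1d *m S1) -
   ((P2d *m R2 *m P1d *m R1 - P2d *m S2) + - (P2d *m R2 *m P1d *m S1))).
  have := le_nonneg hcmpA; rewrite -/X -/Ah I4 I5.
  move: (P2d *m P2) ((P2d *m R2 - P2d *m S2 *m P1d *m R1) + P2d *m S2 *m P1d *m S1)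
    ((P2d *m R2 *m P1d *m R1 - P2d *m S2) + - (P2d *m R2 *m P1d *m S1)) => Y1 Y2 Y3.
  by have -> : Y1 - Y3 - (Y1 - Y2) = Y2 - Y3 by apply/matrixP => i j; rewrite !mxE; ring.
have Hrange : forall x : 'cV_n, exists w, P2 *m x = Ah *m w.
  move=> x.
  have [z Hz] : in_range A (P2 *m x) by apply/(hP2r (P2 *m x)); exists x.
  set w0 := invmx X *m (P2 *m x).
  have Xw0 : X *m w0 = P2 *m x by rewrite /w0 mulKVmx.
  have [z3 Hz3] : in_range A (S2 *m (P1d *m w0)).
    by apply/(hP2r _); apply/(hS2r _); exists (P1d *m w0).
  have Ew0 : w0 = P2 *m x + S2 *m (P1d *m w0).
    by rewrite -Xw0 /X mulmxBl mul1mx mulmxA subrK.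
  exists (z + z3); rewrite /Ah -mulmxA mulmxDr -Hz -Hz3 -Ew0 Xw0 //.
have HAP : Ah *m Ahd *m P2 = P2 by exact: rangeMP hAhd Hrange.
have F3 : P2d *m Ah *m Ahd = P2d by exact: MP_left hP2d hAhd HAP.
have F2' : Ah *m P2d *m P2 = Ah by rewrite /Ah -!mulmxA (mulmxA A) F1c.
have F2 : P2d *m P2 *m Ahd = Ahd by exact: MP_right hP2d hAhd F2'.
have NE : R2 - S2 *m P1d *m R1 + S2 *m P1d *m S1 = P2 - Ah.
  rewrite AhE; move: (S2 *m P1d *m R1) (S2 *m P1d *m S1) => Y1 Y2.
  by apply/matrixP => i j; rewrite !mxE; ring.
have I7 : Ahd - ((P2d *m R2 - P2d *m S2 *m P1d *m R1) + P2d *m S2 *m P1d *m S1) *m Ahd = P2d.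
  by rewrite I6 NE mulmxBr mulmxBl F2 F3 opprB addrC subrK.
have T0 := nonneg_add B0 C0.
have L1 := L1_gen T0 hP2d0 hAhd0 I6 I7.
apply/andP; split.
  exact: claimB.
exact: claimA.
Qed.
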